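(* Any degree-three IQP circuit $H^{\otimes n}D_{IQP3}H^{\otimes n}$ on $n$ qubits whose diagonal part $D_{IQP3}$ consists of $d$ layers of $Z$, $CZ$ and $CCZ$ gates can be compiled, after appending $O(nd)$ ancilla qubits initialized to $|0\rangle$ (and returned to $|0\rangle$), into an equivalent circuit consisting of Clifford gates and a single layer of gates $T^{\pm1}$.
   Context: A degree-three IQP circuit has the form $H^{\otimes n}D_{IQP3}H^{\otimes n}$ where $D_{IQP3}$ is a product of $Z$, $CZ$ and $CCZ$ gates. $T=\mathrm{diag}(1,e^{i\pi/4})$. A single layer means the $T^{\pm1}$ gates act in parallel on distinct qubits. The Clifford group is generated by $H$, $S=\mathrm{diag}(1,i)$ and CNOT. *)

(* Defs.v *)
From mathcomp Require Import all_boot all_order all_algebra all_field.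
Set Implicit Arguments. Unset Strict Implicit. Unset Printing Implicit Defensive.
Import Order.TTheory GRing.Theory Num.Theory.
Local Open Scope ring_scope.

Definition bits (m : nat) := {ffun 'I_m -> bool}.

(* operators on m qubits: A x y = <x| A |y> *)
Definition op (m : nat) := bits m -> bits m -> algC.

Definition opmul m (A B : op m) : op m := fun x y => \sum_(z : bits m) A x z * B z y.
Definition opid m : op m := fun x y => (x == y)%:R.
Definition diagop m (f : bits m -> algC) : op m := fun x y => (x == y)%:R * f x.

Definition omega : algC := (1 + 'i) / sqrtC 2.

Definition Hgate m (q : 'I_m) : op m := fun x y =>
  if [forall j, (j != q) ==> (x j == y j)]
  then (if x q && y q then -1 else 1) / sqrtC 2 else 0.
Definition Sgate m (q : 'I_m) : op m := diagop (fun x => if x q then 'i else 1).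
Definition CNOTgate m (c t : 'I_m) : op m := fun x y =>
  (x == [ffun j => if j == t then y t (+) y c else y j])%:R.

Inductive cgate (m : nat) :=
| CH of 'I_m
| CS of 'I_m
| CCNOT of 'I_m & 'I_m.

Definition cgate_wf m (g : cgate m) : bool :=
  if g is CCNOT c t then c != t else true.

Definition cgate_op m (g : cgate m) : op m :=
  match g with
  | CH q => Hgate q
  | CS q => Sgate q
  | CCNOT c t => CNOTgate c t
  end.

(* circuit [g1; ...; gk], g1 applied first: operator G_k ... G_1 *)
Fixpoint circ m (s : seq (cgate m)) : op m :=
  match s with
  | [::] => @opid m
  | g :: s' => opmul (circ s') (cgate_op g)
  end.

Definition tlayer m (l : {ffun 'I_m -> option bool}) : op m :=
  diagop (fun x => \prod_(q : 'I_m)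
     match l q with
     | None => 1
     | Some true => if x q then omega else 1
     | Some false => if x q then omega^-1 else 1
     end).

(* A Z / CZ / CCZ gate is given by the set of 1, 2 or 3 qubits it acts on;
   a layer is a list of such gates acting on pairwise disjoint qubits. *)
Definition is_layer n (l : seq {set 'I_n}) : bool :=
  all (fun s : {set 'I_n} => (0 < #|s| <= 3)%N) l &&
  pairwise (fun s t : {set 'I_n} => [disjoint s & t]) l.

Definition DIQP3 n (L : seq (seq {set 'I_n})) : op n :=
  diagop (fun x => \prod_(l <- L) \prod_(s <- l)
                     (if [forall i in s, x i] then -1 else 1)).

Definition Hall n : op n := fun x y =>
  \prod_(q : 'I_n) ((if x q && y q then -1 else 1) / sqrtC 2).

Definition iqp3 n (L : seq (seq {set 'I_n})) : op n :=
  opmul (@Hall n) (opmul (DIQP3 L) (@Hall n)).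

(* |x> (x) |u> on n + a qubits: system qubits first, ancillas last *)
Definition join n a (x : bits n) (u : bits a) : bits (n + a) :=
  [ffun i => match split i with inl j => x j | inr k => u k end].

Definition zerob a : bits a := [ffun _ => false].

(* Main.v *)
Require Import Defs.
From mathcomp Require Import all_boot all_order all_algebra all_field.
From Stdlib Require Import FunctionalExtensionality.
Set Implicit Arguments. Unset Strict Implicit. Unset Printing Implicit Defensive.
Import Order.TTheory GRing.Theory Num.Theory.
Local Open Scope ring_scope.
From mathcomp Require Import ring.

Lemma opE m (A B : op m) : (forall x y, A x y = B x y) -> A = B.
Proof. move=> H; apply: functional_extensionality => x; apply: functional_extensionality => y; exact: H. Qed.

Lemma opmulA m (A B C : op m) : opmul A (opmul B C) = opmul (opmul A B) C.
Proof.
apply: opE => x y; rewrite /opmul.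
under eq_bigr do rewrite big_distrr.
rewrite exchange_big /=; apply: eq_bigr => z _.
rewrite big_distrl /=; apply: eq_bigr => w _; by rewrite mulrA.
Qed.

Lemma opmul1 m (A : op m) : opmul A (@opid m) = A.
Proof.
apply: opE => x y; rewrite /opmul /opid (bigD1 y) //= eqxx mulr1 big1 ?addr0 //.
by move=> z /negbTE ->; rewrite mulr0.
Qed.

Lemma circ_cat m (s1 s2 : seq (cgate m)) : circ (s1 ++ s2) = opmul (circ s2) (circ s1).
Proof.
elim: s1 => [|g s1 IH] /=; first by rewrite opmul1.
by rewrite IH opmulA.
Qed.

Definition perm_op m (f : bits m -> bits m) : op m := fun x y => (x == f y)%:R.

Lemma opmul_perm m (f g : bits m -> bits m) :
  opmul (perm_op g) (perm_op f) = perm_op (g \o f).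
Proof.
apply: opE => x y; rewrite /opmul /perm_op (bigD1 (f y)) //= eqxx mulr1 big1 ?addr0 //.
by move=> z /negbTE ->; rewrite mulr0.
Qed.

Lemma perm_diag_perm m (f : bits m -> bits m) (phi : bits m -> algC) :
  (forall z, f (f z) = z) ->
  opmul (perm_op f) (opmul (diagop phi) (perm_op f)) = diagop (phi \o f).
Proof.
move=> ff; apply: opE => x y; rewrite /opmul /perm_op /diagop.
have inner z : \sum_w (z == w)%:R * phi z * (w == f y)%:R = phi z * (z == f y)%:R.
  rewrite (bigD1 z) //= eqxx mul1r big1 ?addr0 // => w.
  by rewrite eq_sym => /negbTE ->; rewrite !mul0r.
under eq_bigr do rewrite inner.
rewrite (bigD1 (f y)) //= big1 ?addr0.
  rewrite eqxx mulr1 ff; case: eqP => [->|]; by rewrite ?mul1r ?mul0r.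
by move=> z /negbTE ->; rewrite !mulr0.
Qed.

Definition tens m (g : 'I_m -> bool -> bool -> algC) : op m :=
  fun x y => \prod_j g j (x j) (y j).

Lemma opmul_tens m (f g : 'I_m -> bool -> bool -> algC) :
  opmul (tens f) (tens g) = tens (fun j a b => \sum_c f j a c * g j c b).
Proof.
apply: opE => x y; rewrite /opmul /tens.
rewrite (bigA_distr_bigA (fun j c => f j (x j) c * g j c (y j))) /=.
by apply: eq_bigr => z _; rewrite big_split.
Qed.

Lemma prod_ind m (P : pred 'I_m) (b : 'I_m -> bool) :
  \prod_(j | P j) (b j)%:R = ([forall j, P j ==> b j]%:R : algC).
Proof.
case: (boolP [forall j, P j ==> b j]) => H.
  by rewrite big1 // => j Pj; move/forallP: H => /(_ j); rewrite Pj /= => ->.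
move: H; rewrite negb_forall => /existsP [j]; rewrite negb_imply => /andP [Pj bj].
by rewrite (bigD1 j) //= (negbTE bj) mul0r.
Qed.

Lemma eq_bits m (x y : bits m) : (x == y) = [forall j, x j == y j].
Proof.
apply/eqP/forallP => [-> //|H]; apply/ffunP => j; exact/eqP.
Qed.

Lemma opid_tens m : @opid m = tens (fun _ a b => (a == b)%:R).
Proof.
apply: opE => x y; rewrite /opid /tens prod_ind eq_bits.
by congr (_%:R); apply: eq_forallb.
Qed.

Definition hfac (a b : bool) : algC := (if a && b then -1 else 1) / sqrtC 2.

Lemma Hgate_tens m (q : 'I_m) :
  Hgate q = tens (fun j a b => if j == q then hfac a b else (a == b)%:R).
Proof.
apply: opE => x y; rewrite /Hgate /tens (bigD1 q) //= eqxx.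
rewrite (eq_bigr (fun j => (x j == y j)%:R)); last by move=> j /negbTE ->.
rewrite prod_ind; case: ifP => _; by rewrite ?mulr1 ?mulr0.
Qed.


Section P2.
Variables (n a : nat).

Lemma join_l (x : bits n) (u : bits a) i : join x u (lshift a i) = x i.
Proof. by rewrite ffunE (unsplitK (inl _ i)). Qed.
Lemma join_r (x : bits n) (u : bits a) k : join x u (rshift n k) = u k.
Proof. by rewrite ffunE (unsplitK (inr _ k)). Qed.

Lemma lr_neq (i : 'I_n) (k : 'I_a) : (lshift a i == rshift n k) = false.
Proof.
apply/negbTE/eqP => /(congr1 val) /= h.
by have := ltn_ord i; rewrite h ltnNge leq_addr.
Qed.

Lemma splitLR (j : 'I_(n + a)) : (exists i, j = lshift a i) \/ (exists k, j = rshift n k).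
Proof. rewrite -(splitK j); case: (split j) => [i|k]; [left|right]; by eexists. Qed.

Definition cnotf m (c t : 'I_m) (y : bits m) : bits m :=
  [ffun j => if j == t then y t (+) y c else y j].

Definition cn (p : 'I_n * 'I_a) : cgate (n + a) := CCNOT (lshift a p.1) (rshift n p.2).

Definition cnf (s : seq ('I_n * 'I_a)) (z : bits (n + a)) : bits (n + a) :=
  [ffun j => match split j with
             | inl _ => z j
             | inr k => z j (+) \big[addb/false]_(p <- s | p.2 == k) z (lshift a p.1) end].

Lemma cnf_l s z i : cnf s z (lshift a i) = z (lshift a i).
Proof. by rewrite ffunE (unsplitK (inl _ i)). Qed.
Lemma cnf_r s z k : cnf s z (rshift n k) =
   z (rshift n k) (+) \big[addb/false]_(p <- s | p.2 == k) z (lshift a p.1).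
Proof. by rewrite ffunE (unsplitK (inr _ k)). Qed.

Lemma perm_op_ext m (f g : bits m -> bits m) : f =1 g -> perm_op f = perm_op g.
Proof. by move=> H; apply: opE => x y; rewrite /perm_op H. Qed.

Lemma circ_cnots s : circ (map cn s) = perm_op (cnf s).
Proof.
elim: s => [|g s IH] /=.
  apply: opE => x y; rewrite /opid /perm_op; congr (_ == _)%:R.
  apply/ffunP => j; case: (splitLR j) => [[i ->]|[k ->]]; first by rewrite cnf_l.
  by rewrite cnf_r big_nil addbF.
rewrite IH; change (opmul (perm_op (cnf s)) (perm_op (cnotf (lshift a g.1) (rshift n g.2))) = perm_op (cnf (g :: s))).
rewrite opmul_perm; apply: perm_op_ext => z /=.
apply/ffunP => j; case: (splitLR j) => [[i ->]|[k ->]].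
  by rewrite !cnf_l ffunE lr_neq.
rewrite !cnf_r big_cons ffunE (inj_eq (@rshift_inj _ _)).
have -> : \big[addb/false]_(p <- s | p.2 == k) cnotf (lshift a g.1) (rshift n g.2) z (lshift a p.1)
        = \big[addb/false]_(p <- s | p.2 == k) z (lshift a p.1).
  by apply: eq_bigr => p _; rewrite ffunE lr_neq.
rewrite [k == g.2]eq_sym; case: eqP => [->|_] //.
by rewrite addbA.
Qed.

Lemma cnf_inv s z : cnf s (cnf s z) = z.
Proof.
apply/ffunP => j; case: (splitLR j) => [[i ->]|[k ->]]; first by rewrite !cnf_l.
rewrite !cnf_r.
have -> : \big[addb/false]_(p <- s | p.2 == k) cnf s z (lshift a p.1)
        = \big[addb/false]_(p <- s | p.2 == k) z (lshift a p.1).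
  by apply: eq_bigr => p _; rewrite cnf_l.
exact: addbK.
Qed.

Lemma sum_join (F : bits (n + a) -> algC) :
  \sum_z F z = \sum_(v : bits n) \sum_(w : bits a) F (join v w).
Proof.
rewrite pair_big /=.
pose g (z : bits (n + a)) : bits n * bits a :=
  ([ffun i => z (lshift a i)], [ffun k => z (rshift n k)]).
rewrite (reindex (fun p : bits n * bits a => join p.1 p.2)) /=.
  by apply: eq_bigr.
exists g => [[v w] _|z _].
  by rewrite /g; congr pair; apply/ffunP => i; rewrite ffunE ?join_l ?join_r.
apply/ffunP => j; case: (splitLR j) => [[i ->]|[k ->]]; by rewrite ?join_l ?join_r ffunE.
Qed.

End P2.

Lemma sum_eq_l (T : finType) (a : T) (F : T -> algC) : \sum_c (a == c)%:R * F c = F a.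
Proof.
rewrite (bigD1 a) //= eqxx mul1r big1 ?addr0 // => c.
by rewrite eq_sym => /negbTE ->; rewrite mul0r.
Qed.
Lemma sum_eq_r (T : finType) (b : T) (F : T -> algC) : \sum_c F c * (c == b)%:R = F b.
Proof.
rewrite (bigD1 b) //= eqxx mulr1 big1 ?addr0 // => c /negbTE ->; by rewrite mulr0.
Qed.

Lemma circ_hs m (qs : seq 'I_m) : uniq qs ->
  circ (map (@CH m) qs) = tens (fun j a b => if j \in qs then hfac a b else (a == b)%:R).
Proof.
elim: qs => [|q qs IH] /=; first by rewrite opid_tens.
case/andP => qn uq; rewrite IH // Hgate_tens opmul_tens.
congr tens; apply: functional_extensionality => j.
apply: functional_extensionality => x; apply: functional_extensionality => y.
rewrite in_cons; case: (eqVneq j q) => [->|jq] /=.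
  by rewrite (negbTE qn) sum_eq_l.
by rewrite sum_eq_r.
Qed.


Definition tf (o : option bool) (b : bool) : algC :=
  match o with
  | None => 1
  | Some true => if b then omega else 1
  | Some false => if b then omega^-1 else 1
  end.

Definition xpar n (l : seq 'I_n) (v : bits n) := \big[addb/false]_(i <- l) v i.

Section P3.
Variables (n : nat) (sp : seq (seq 'I_n * option bool)).
Local Notation A := (size sp).
Definition d0 : seq 'I_n * option bool := ([::], None).

Definition pairs : seq ('I_n * 'I_A) :=
  flatten [seq [seq (i, k) | i <- (nth d0 sp k).1] | k : 'I_A <- enum 'I_A].
Definition Pl := map (@cn n A) pairs.
Definition HSl := map (@CH (n + A)) (map (lshift A) (enum 'I_n)).
Definition tl : {ffun 'I_(n + A) -> option bool} :=
  [ffun j => match split j with inl _ => None | inr k => (nth d0 sp k).2 end].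
Definition Phi (v : bits n) := \prod_(e <- sp) tf e.2 (xpar e.1 v).

Lemma reassoc m (P B C D E : op m) :
  opmul (opmul P B) (opmul C (opmul D E)) = opmul P (opmul (opmul B (opmul C D)) E).
Proof. by rewrite !opmulA. Qed.

Lemma opmul_diag m (P B : op m) psi x y :
  opmul P (opmul (diagop psi) B) x y = \sum_z P x z * (psi z * B z y).
Proof.
apply: eq_bigr => z _; congr (_ * _); rewrite /opmul /diagop.
under eq_bigr do rewrite -mulrA.
by rewrite sum_eq_l.
Qed.

Definition hsf (j : 'I_(n + A)) a b : algC :=
  if j \in map (lshift A) (enum 'I_n) then hfac a b else (a == b)%:R.

Lemma tens_join y v (u w : bits A) :
  tens hsf (join y u) (join v w) = Hall y v * (u == w)%:R.
Proof.
rewrite /tens big_split_ord /=; congr (_ * _).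
  apply: eq_bigr => i _; rewrite !join_l /hsf mem_map ?mem_enum //.
  exact: lshift_inj.
rewrite eq_bits -(prod_ind xpredT); apply: eq_bigr => k _.
rewrite !join_r /hsf; case: mapP => // [[i _ /eqP]].
by rewrite eq_sym lr_neq.
Qed.

Lemma pairs_par (v : bits n) (k : 'I_A) :
  \big[addb/false]_(p <- pairs | p.2 == k) v p.1 = xpar (nth d0 sp k).1 v.
Proof.
rewrite big_flatten big_map /=.
under eq_bigr do rewrite big_map /=.
rewrite (bigD1_seq k) ?mem_enum ?enum_uniq //=.
rewrite [X in _ (+) X]big1_seq ?addbF.
  by rewrite /xpar; apply: eq_bigl => i; rewrite eqxx.
move=> k' /andP [kk _]; rewrite big_pred0 // => i; exact: negbTE.
Qed.

Lemma phi_eq v :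
  \prod_q (match tl q with
           | None => 1
           | Some true => if cnf pairs (join v (zerob A)) q then omega else 1
           | Some false => if cnf pairs (join v (zerob A)) q then omega^-1 else 1
           end) = Phi v.
Proof.
rewrite (eq_bigr (fun q => tf (tl q) (cnf pairs (join v (zerob A)) q))); last first.
  by move=> q _; case: (tl q) => [[]|].
rewrite big_split_ord /= big1 ?mul1r; last first.
  by move=> i _; rewrite ffunE (unsplitK (inl _ i)).
rewrite /Phi (big_nth d0) big_mkord; apply: eq_bigr => k _.
rewrite ffunE (unsplitK (inr _ k)) cnf_r join_r ffunE addFb -pairs_par.
congr tf; apply: eq_bigr => p _; by rewrite join_l.
Qed.

Lemma construction (x y : bits n) (u : bits A) :
  opmul (circ (Pl ++ HSl)) (opmul (tlayer tl) (circ (HSl ++ Pl))) (join y u) (join x (zerob A))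
  = if u == zerob A then \sum_v Hall y v * (Phi v * Hall v x) else 0.
Proof.
rewrite !circ_cat /Pl circ_cnots /HSl circ_hs; last first.
  by rewrite map_inj_uniq ?enum_uniq //; exact: lshift_inj.
rewrite reassoc /tlayer perm_diag_perm; last exact: cnf_inv.
rewrite opmul_diag sum_join.
rewrite (eq_bigr (fun v => Hall y v * (u == zerob A)%:R * (Phi v * Hall v x))); last first.
  move=> v _; rewrite (bigD1 (zerob A)) //= [X in _ + X]big1 ?addr0; last first.
    by move=> w /negbTE wn; rewrite !tens_join wn !mulr0.
  by rewrite !tens_join eqxx mulr1 phi_eq.
case: eqP => _; first by apply: eq_bigr => v _; rewrite mulr1.
by rewrite big1 // => v _; rewrite mulr0 mul0r.
Qed.

Lemma construction_wf : all (@cgate_wf _) (HSl ++ Pl) && all (@cgate_wf _) (Pl ++ HSl).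
Proof.
have h1 : all (@cgate_wf _) HSl by rewrite /HSl all_map; apply/allP.
have h2 : all (@cgate_wf _) Pl.
  by rewrite /Pl all_map; apply/allP => p _ /=; rewrite lr_neq.
by rewrite !all_cat h1 h2.
Qed.
End P3.


Lemma w2 : omega ^+ 2 = 'i.
Proof.
rewrite /omega expr_div_n sqrtCK.
have -> : (1 + 'i) ^+ 2 = 2 * 'i :> algC by rewrite sqrrD sqrCi expr1n mul1r; ring.
by rewrite mulrAC divff ?mul1r // pnatr_eq0.
Qed.

Lemma w4 : omega ^+ 4 = -1.
Proof. by rewrite (_ : 4 = 2 * 2)%N // exprM w2 sqrCi. Qed.

Lemma w8 : omega ^+ 8 = 1.
Proof. by rewrite (_ : 8 = 4 * 2)%N // exprM w4 sqrrN expr1n. Qed.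

Lemma wneq0 : omega != 0.
Proof. apply/eqP => h; have := w8; rewrite h expr0n /= => /eqP; by rewrite eq_sym oner_eq0. Qed.

Lemma winv : omega^-1 = omega ^+ 7.
Proof.
have H := mulfI wneq0; apply: H; rewrite -exprS w8 divff //; exact: wneq0.
Qed.

Definition tfexp (o : option bool) (b : bool) : nat :=
  match o with None => 0 | Some true => b | Some false => 7 * b end.

Lemma tf_pow o b : tf o b = omega ^+ tfexp o b.
Proof. by case: o => [[]|]; case: b => //=; rewrite ?winv ?expr1. Qed.

Lemma prod_pow T (l : seq T) (F : T -> nat) :
  \prod_(e <- l) omega ^+ F e = omega ^+ (\sum_(e <- l) F e).
Proof.
elim: l => [|e l IH]; first by rewrite !big_nil.
by rewrite !big_cons IH exprD.
Qed.

Lemma wpow N : omega ^+ N =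
  if (N %% 8 == 0)%N then 1 else if (N %% 8 == 4)%N then -1 else omega ^+ (N %% 8).
Proof.
have -> : omega ^+ N = omega ^+ (N %% 8).
  by rewrite {1}(divn_eq N 8) exprD mulnC exprM w8 expr1n mul1r.
by case: eqP => [->|_]; [rewrite expr0 | case: eqP => [->|_] //; rewrite w4].
Qed.

Section P4.
Variable n : nat.
Local Notation T := (Some true).
Local Notation F := (Some false).

Definition gspec (s : {set 'I_n}) : seq (seq 'I_n * option bool) :=
  match enum s with
  | [:: i] => [:: ([:: i], T); ([:: i], T); ([:: i], T); ([:: i], T); (@d0 n); (@d0 n); (@d0 n); (@d0 n)]
  | [:: i; j] => [:: ([:: i], T); ([:: i], T); ([:: j], T); ([:: j], T);
                     ([:: i; j], F); ([:: i; j], F); (@d0 n); (@d0 n)]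
  | [:: i; j; k] => [:: ([:: i], T); ([:: j], T); ([:: k], T); ([:: i; j], F);
                     ([:: i; k], F); ([:: j; k], F); ([:: i; j; k], T); (@d0 n)]
  | _ => nseq 8 (@d0 n)
  end.

Lemma size_gspec s : size (gspec s) = 8.
Proof. by rewrite /gspec; case: (enum s) => [|i [|j [|k [|l r]]]]. Qed.

Lemma forall_all (s : {set 'I_n}) (v : bits n) : [forall i in s, v i] = all v (enum s).
Proof.
apply/forall_inP/allP => H i; [rewrite mem_enum|]; first exact: H.
by move=> iS; apply: H; rewrite mem_enum.
Qed.

Lemma gate_ok (v : bits n) (s : {set 'I_n}) : (0 < #|s| <= 3)%N ->
  \prod_(e <- gspec s) tf e.2 (xpar e.1 v) = if [forall i in s, v i] then -1 else 1.
Proof.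
move=> hs; under eq_bigr do rewrite tf_pow.
rewrite prod_pow wpow forall_all /gspec /xpar.
move: hs; rewrite cardE.
case: (enum s) => [|i [|j [|k [|l r]]]] //= _;
  rewrite !big_cons !big_nil /=.
- by case: (v i); reflexivity.
- by case: (v i); case: (v j); reflexivity.
- by case: (v i); case: (v j); case: (v k); reflexivity.
Qed.
End P4.


Lemma layer_size_gen n (l : seq {set 'I_n}) (U : {set 'I_n}) :
  all (fun s : {set 'I_n} => (0 < #|s|)%N) l ->
  pairwise (fun s t : {set 'I_n} => [disjoint s & t]) l ->
  all (fun s : {set 'I_n} => s \subset U) l -> (size l <= #|U|)%N.
Proof.
elim: l U => [|s l IH] U //= /andP [s0 l0] /andP [ds dl] /andP [sU lU].
have : (size l <= #|U :\: s|)%N.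
  apply: IH => //; apply/allP => t tl; rewrite subsetD.
  rewrite (allP lU) //= disjoint_sym; exact: (allP ds).
rewrite cardsD (setIidPr sU) => h.
have hs : (#|s| <= #|U|)%N by exact: subset_leq_card.
by apply: leq_ltn_trans h _; rewrite ltn_subrL s0 (leq_trans s0 hs).
Qed.

Lemma layer_size n (l : seq {set 'I_n}) : is_layer l -> (size l <= n)%N.
Proof.
case/andP => ha hp.
have := @layer_size_gen n l [set: 'I_n]; rewrite cardsT card_ord; apply => //.
  by apply/allP => s /(allP ha) /andP [].
by apply/allP => s _; exact: subsetT.
Qed.

Lemma flatten_size n (L : seq (seq {set 'I_n})) :
  all (@is_layer n) L -> (size (flatten L) <= n * size L)%N.
Proof.
elim: L => [|l L IH] //= /andP [hl hL].
by rewrite size_cat mulnS leq_add // ?layer_size // IH.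
Qed.

Lemma size_sp n (G : seq {set 'I_n}) : size (flatten (map (@gspec n) G)) = (8 * size G)%N.
Proof.
elim: G => [|s G IH] //=; by rewrite size_cat IH size_gspec mulnS.
Qed.

Theorem lemma3 :
  exists K : nat,
  forall (n d : nat) (L : seq (seq {set 'I_n})),
    size L = d -> all (@is_layer n) L ->
    exists a : nat, (a <= K * (n * d))%N /\
    exists (C1 C2 : seq (cgate (n + a))) (tl : {ffun 'I_(n + a) -> option bool}),
      all (@cgate_wf _) C1 /\ all (@cgate_wf _) C2 /\
      forall (x y : bits n) (u : bits a),
        opmul (circ C2) (opmul (tlayer tl) (circ C1)) (join y u) (join x (zerob a))
        = if u == zerob a then iqp3 L y x else 0.
Proof.
exists 8%N => n d L hd hL.
pose G := flatten L; pose sp := flatten (map (@gspec n) G).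
exists (size sp); split.
  by rewrite size_sp leq_mul2l /= -hd flatten_size.
exists (HSl sp ++ Pl sp), (Pl sp ++ HSl sp), (tl sp).
have /andP [w1 w2] := construction_wf sp.
split => //; split => // x y u.
rewrite construction; case: eqP => // _.
rewrite /iqp3 opmul_diag; apply: eq_bigr => v _; congr (_ * (_ * _)).
rewrite /Phi /sp big_flatten big_map /= -big_flatten /=.
apply: eq_big_seq => s sG.
apply: gate_ok.
move/flattenP: sG => [l lL sl].
by have /andP [/allP /(_ s sl) ok _] := allP hL l lL.
Qed.
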